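(* Let $\Gamma$ be an oriented hypergraph with $A\neq\mathbf 0$ and strong coloring number $\chi=\chi(\Gamma)$, and suppose $\chi=\dfrac{\lambda_N-\lambda_1}{1-\lambda_1}$. Let $g$ be any eigenfunction of $L$ with eigenvalue $\lambda_N$, and let $V_1,\dots,V_\chi$ be the color classes of any proper strong $\chi$-coloring. Then: (1) $\operatorname{supp}(g)\cap V_i\neq\varnothing$ for all $1\le i\le\chi$; (2) $S^g_{ij}<0$ for all $1\le i<j\le\chi$; (3) for all $1\le i<j\le\chi$, $\mathrm{RQ}(g_{ij})=\lambda_1=\dfrac{\chi-\lambda_N}{\chi-1}$, and $g_{ij}$ is an eigenfunction of $L$ with eigenvalue $\lambda_1$. Consequently the multiplicity $m_\Gamma(\lambda_1)$ of $\lambda_1=(\chi-\lambda_N)/(\chi-1)$ is at least $\chi-1$, and this inequality is strict if $m_\Gamma(\lambda_N)>1$.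
   Context: An oriented hypergraph $\Gamma=(V,E,\varphi)$ consists of a finite vertex set $V$ with $|V|=N$, an edge set $E\subseteq\mathcal P(V)$, and a function $\varphi\colon V\times E\to\{-1,0,1\}$ with $\varphi(v,e)\neq 0$ iff $v\in e$. Two vertices $v,w\in e$ are co-oriented in $e$ if $\varphi(v,e)=\varphi(w,e)$ and anti-oriented in $e$ if $\varphi(v,e)=-\varphi(w,e)$. The degree is $\deg v=|\{e\in E: v\in e\}|$; we assume every vertex has degree at least $1$, and $D=\mathrm{diag}(\deg v)_{v\in V}$. The adjacency matrix $A$ is the $N\times N$ matrix with $A_{v,v}=0$ and, for $v\neq w$, $A_{v,w}=(\#\text{edges in which } v,w \text{ are anti-oriented})-(\#\text{edges in which } v,w \text{ are co-oriented})$. The normalized Laplacian is $L=\mathrm{Id}-D^{-1}A$; it is self-adjoint for $\langle f,g\rangle=\sum_{v}\deg v\, f(v)g(v)$ on functions $V\to\mathbb R$, with (real) eigenvalues $\lambda_1\le\dots\le\lambda_N$; $m_\Gamma(\lambda)$ denotes the multiplicity of $\lambda$. The Rayleigh quotient of $f\neq0$ is $\mathrm{RQ}(f)=\langle Lf,f\rangle/\langle f,f\rangle$. A proper strong $k$-coloring is a map $V\to\{1,\dots,k\}$ such that any two distinct vertices in a common edge receive different colors; $\chi(\Gamma)$ is the least such $k$. For a function $g\colon V\to\mathbb R$ and color classes $V_1,\dots,V_\chi$, define $S^g_{ij}=\sum_{v\in V_i,\,w\in V_j}A_{v,w}g(v)g(w)$, and define $g_{ij}\colon V\to\mathbb R$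 by $g_{ij}(v)=g(v)$ if $v\in V_i$, $g_{ij}(v)=-g(v)$ if $v\in V_j$, and $g_{ij}(v)=0$ otherwise. *)

(* Defs.v *)
From HB Require Import structures.
From mathcomp Require Import all_boot all_order all_algebra.
From mathcomp Require Import reals.
Set Implicit Arguments. Unset Strict Implicit. Unset Printing Implicit Defensive.
Import Order.TTheory GRing.Theory Num.Theory.
Local Open Scope ring_scope.

Definition is_oriented_hypergraph (N : nat) (E : {set {set 'I_N}})
  (phi : 'I_N -> {set 'I_N} -> int) : Prop :=
  forall v e, e \in E ->
    (phi v e \in [:: (-1)%R; 0%R; 1%R]) /\ ((phi v e != 0) = (v \in e)).

Definition hdeg (N : nat) (E : {set {set 'I_N}}) (v : 'I_N) : nat :=
  #|[set e in E | v \in e]|.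

Definition adj (R : realType) (N : nat) (E : {set {set 'I_N}})
  (phi : 'I_N -> {set 'I_N} -> int) (v w : 'I_N) : R :=
  if v == w then 0 else
    (#|[set e in E | [&& v \in e, w \in e & phi v e == - phi w e]]|%:R
     - #|[set e in E | [&& v \in e, w \in e & phi v e == phi w e]]|%:R).

Definition adjmx (R : realType) (N : nat) (E : {set {set 'I_N}}) (phi : 'I_N -> {set 'I_N} -> int) : 'M[R]_N :=
  \matrix_(v, w) adj R E phi v w.

Definition lapmx (R : realType) (N : nat) (E : {set {set 'I_N}}) (phi : 'I_N -> {set 'I_N} -> int) : 'M[R]_N :=
  \matrix_(v, w) ((v == w)%:R - ((hdeg E v)%:R)^-1 * adj R E phi v w).

Definition lap_apply (R : realType) (N : nat) (E : {set {set 'I_N}}) (phi : 'I_N -> {set 'I_N} -> int) (f : 'I_N -> R) (v : 'I_N) : R :=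
  \sum_w lapmx R E phi v w * f w.

Definition is_eigenfunction (R : realType) (N : nat) (E : {set {set 'I_N}}) (phi : 'I_N -> {set 'I_N} -> int) (f : 'I_N -> R) (l : R) : Prop :=
  (exists v, f v != 0) /\ forall v, lap_apply E phi f v = l * f v.

Definition wdot (R : realType) N (E : {set {set 'I_N}}) (f g : 'I_N -> R) : R :=
  \sum_v (hdeg E v)%:R * f v * g v.

Definition RQ (R : realType) (N : nat) (E : {set {set 'I_N}}) (phi : 'I_N -> {set 'I_N} -> int) (f : 'I_N -> R) : R :=
  wdot E (lap_apply E phi f) f / wdot E f f.

Definition is_min_eigenvalue (R : realType) (N : nat) (E : {set {set 'I_N}}) (phi : 'I_N -> {set 'I_N} -> int) (l : R) : Prop :=
  eigenvalue (lapmx R E phi) l /\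
  forall m, eigenvalue (lapmx R E phi) m -> l <= m.
Definition is_max_eigenvalue (R : realType) (N : nat) (E : {set {set 'I_N}}) (phi : 'I_N -> {set 'I_N} -> int) (l : R) : Prop :=
  eigenvalue (lapmx R E phi) l /\
  forall m, eigenvalue (lapmx R E phi) m -> m <= l.

Definition mult (R : realType) (N : nat) (E : {set {set 'I_N}}) (phi : 'I_N -> {set 'I_N} -> int) (l : R) : nat :=
  mup l (char_poly (lapmx R E phi)).

Definition proper_strong_coloring N (E : {set {set 'I_N}}) k (c : 'I_N -> 'I_k) : Prop :=
  forall e, e \in E -> forall v w, v \in e -> w \in e -> v != w -> c v != c w.

Definition is_strong_chromatic_number N (E : {set {set 'I_N}}) (k : nat) : Prop :=
  (exists c : 'I_N -> 'I_k, proper_strong_coloring E c) /\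
  forall k', (exists c : 'I_N -> 'I_k', proper_strong_coloring E c) -> (k <= k')%N.

Definition Sg (R : realType) (N : nat) (E : {set {set 'I_N}}) (phi : 'I_N -> {set 'I_N} -> int) k (c : 'I_N -> 'I_k) (g : 'I_N -> R) (i j : 'I_k) : R :=
  \sum_(v | c v == i) \sum_(w | c w == j) adj R E phi v w * g v * g w.

Definition gij (R : realType) N k (c : 'I_N -> 'I_k) (g : 'I_N -> R) (i j : 'I_k) : 'I_N -> R :=
  fun v => if c v == i then g v else if c v == j then - g v else 0.

(* Main.v *)
Require Import Defs.
From HB Require Import structures.
From mathcomp Require Import all_boot all_order all_algebra.
From mathcomp Require Import reals.
From mathcomp Require Import classical_sets.
From mathcomp Require Import ring lra zify.
Import Order.TTheory GRing.Theory Num.Theory.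
Local Open Scope ring_scope.
Set Implicit Arguments. Unset Strict Implicit. Unset Printing Implicit Defensive.

Section LA.
Variable F : fieldType.

Lemma char_expand m (Q : 'M[F]_m.+1) (a : F) :
  (forall j, Q ord0 j = a * (ord0 == j)%:R) ->
  char_poly Q = ('X - a%:P) * char_poly (row' ord0 (col' ord0 Q)).
Proof.
move=> hQ; rewrite /char_poly (expand_det_row _ ord0) big_ord_recl /=.
rewrite big1 ?addr0; last first.
  move=> j _; rewrite !mxE hQ /= mulr0 subr0 mul0r //.
rewrite !mxE hQ eqxx mulr1 /= /cofactor /= expr0 mul1r.
by rewrite row'_col'_char_poly_mx.
Qed.

Lemma char_dvd_rows (a : F) k : forall m (Q : 'M[F]_m), (k <= m)%N ->
  (forall i : 'I_m, (i < k)%N -> forall j, Q i j = a * (i == j)%:R) ->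
  ('X - a%:P) ^+ k %| char_poly Q.
Proof.
elim: k => [|k IH] m Q hk hQ; first by rewrite expr0 dvd1p.
case: m Q hk hQ => [//|m] Q hk hQ.
rewrite (@char_expand _ _ a); last by move=> j; exact: hQ.
rewrite exprS dvdp_mul2l ?polyXsubC_eq0 //.
apply: IH => // i hi j; rewrite !mxE hQ //= ?(inj_eq lift_inj) //.
Qed.

Lemma char_similar m n (P : 'M[F]_(m, n)) (P' : 'M[F]_(n, m)) (A : 'M[F]_n) :
  m = n -> P *m P' = 1%:M -> P' *m P = 1%:M ->
  char_poly (P *m A *m P') = char_poly A.
Proof.
move=> e; subst m => hPP' hP'P; rewrite /char_poly.
have -> : char_poly_mx (P *m A *m P') =
   map_mx polyC P *m char_poly_mx A *m map_mx polyC P'.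
  rewrite /char_poly_mx mulmxBr mulmxBl !map_mxM; congr (_ - _).
  rewrite scalar_mxC -mulmxA -map_mxM hPP' map_mx1 mulmx1 //.
rewrite !det_mulmx mulrC mulrA -det_mulmx -map_mxM hP'P map_mx1.
by rewrite det1 mul1r.
Qed.

Lemma complete_basis k n (W : 'M[F]_(k, n)) : row_free W ->
  exists r, exists (P : 'M[F]_(k + r, n)) (P' : 'M[F]_(n, k + r)),
   [/\ (k + r = n)%N, P *m P' = 1%:M, P' *m P = 1%:M,
       forall i : 'I_k, row (lshift r i) P = row i W & usubmx P = W].
Proof.
move=> hW; have rk : \rank W = k by apply/eqP.
pose Vb := row_base (W^C)%MS.
pose P := col_mx W Vb.
have kn : (k <= n)%N by rewrite -rk rank_leq_col.
have rP : \rank P = n.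
  rewrite /P -addsmxE (adds_eqmx (eqmx_refl W) (eq_row_base (W^C)%MS)).
  exact/eqP/addsmx_compl_full.
have ekr : (k + \rank (W^C)%MS = n)%N by rewrite mxrank_compl rk subnKC.
exists (\rank (W^C)%MS), P, (pinvmx P); split => //.
- by apply: mulmxVp; rewrite /row_free rP ekr.
- by apply: mulVpmx; rewrite /row_full rP.
- by move=> i; rewrite rowKu.
- by rewrite col_mxKu.
Qed.

Lemma eigen_rows_dvd k n (W : 'M[F]_(k, n)) (A : 'M[F]_n) (a : F) :
  row_free W -> W *m A = a *: W -> ('X - a%:P) ^+ k %| char_poly A.
Proof.
move=> hW hWA; have [r [P [P' [ekr hPP' hP'P hrow _]]]] := complete_basis hW.
rewrite -(char_similar A ekr hPP' hP'P).
apply: char_dvd_rows; first exact: leq_addr.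
move=> i hi j.
have -> : i = lshift r (Ordinal hi) by apply: val_inj.
have : row (lshift r (Ordinal hi)) (P *m A *m P') = a *: row (lshift r (Ordinal hi)) 1%:M.
  have rowZ' : forall m p (B : 'M[F]_(m,p)) l (b : F), row l (b *: B) = b *: row l B.
    by move=> m p B l b; apply/rowP => t; rewrite !mxE.
  rewrite !row_mul hrow -row_mul hWA rowZ' -hrow -scalemxAl -row_mul hPP' //.
move/rowP/(_ j); rewrite !mxE => ->.
by [].
Qed.


Lemma eigen_second n (A : 'M[F]_n) (a : F) (e : 'rV_n) : e != 0 ->
  e *m A = a *: e -> ('X - a%:P) ^+ 2 %| char_poly A ->
  exists x : 'rV_n, exists c : F,
    x *m A = a *: x + c *: e /\ (forall t : F, x != t *: e).
Proof.
move=> e0 heA hdv.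
have hW : row_free e by rewrite /row_free rank_rV e0.
have [r [P [P' [ekr hPP' hP'P hrow hu]]]] := complete_basis hW.
pose Q : 'M[F]_(1 + r) := P *m A *m P'.
have hQ : forall j, Q ord0 j = a * (ord0 == j)%:R.
  move=> j.
  have -> : (ord0 : 'I_(1 + r)) = lshift r ord0 by apply: val_inj.
  have rowZ' : forall m p (B : 'M[F]_(m,p)) l (b : F), row l (b *: B) = b *: row l B.
    by move=> m p B l b; apply/rowP => t; rewrite !mxE.
  have : row (lshift r ord0) Q = a *: row (lshift r ord0) 1%:M.
    rewrite /Q !row_mul hrow -row_mul heA rowZ' -hrow -scalemxAl -row_mul hPP' //.
  by move/rowP/(_ j); rewrite !mxE.
have hchar := @char_expand r Q a hQ.
rewrite -(char_similar A ekr hPP' hP'P) -/Q hchar expr2 in hdv.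
rewrite dvdp_mul2l ?polyXsubC_eq0 // dvdp_XsubCl -eigenvalue_root_char in hdv.
have [u hu1 u0] := eigenvalueP hdv.
have hdr : drsubmx Q = row' ord0 (col' ord0 Q).
  move: (Q) => M.
  by apply/matrixP => i j; rewrite !mxE; congr (M _ _); apply: val_inj.
pose w : 'rV_(1 + r) := row_mx 0 u.
have hwQ : w *m Q = a *: w + row_mx (u *m dlsubmx Q) 0.
  rewrite /w -[Q in LHS]submxK mul_row_block !mul0mx !add0r hdr hu1.
  by rewrite scale_row_mx add_row_mx scaler0 add0r addr0.
have he : e = row_mx 1%:M 0 *m P.
  by rewrite -[P in RHS]vsubmxK mul_row_col mul0mx addr0 mul1mx hu.
exists (w *m P), ((u *m dlsubmx Q) 0 0); split.
  have -> : w *m P *m A = w *m Q *m P.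
    by rewrite /Q -!mulmxA hP'P mulmx1.
  rewrite hwQ mulmxDl -scalemxAl he; congr (_ + _).
  by rewrite scalemxAl scale_row_mx scaler0 scalemx1 -mx11_scalar.
move=> t; apply/eqP => hx.
have : w = (row_mx t%:M 0 : 'rV_(1 + r)).
  have := congr1 (mulmx^~ P') hx.
  rewrite -mulmxA hPP' mulmx1 he -scalemxAl -mulmxA hPP' mulmx1.
  by rewrite scale_row_mx scaler0 scalemx1.
by move/eq_row_mx => [_ hu0]; move: u0; rewrite hu0 eqxx.
Qed.

End LA.

Section BF.
Variables (R : realType) (N : nat).
Implicit Types (M : 'M[R]_N) (x y z : 'I_N -> R).

Definition bf M x y := \sum_v \sum_w M v w * x v * y w.
Definition fadd x y := fun v => x v + y v.
Definition fscale (t : R) x := fun v => t * x v.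

Lemma bf_addl M x y z : bf M (fadd x y) z = bf M x z + bf M y z.
Proof.
rewrite /bf -big_split; apply: eq_bigr => v _; rewrite -big_split.
by apply: eq_bigr => w _ /=; rewrite /fadd; ring.
Qed.

Lemma bf_addr M x y z : bf M x (fadd y z) = bf M x y + bf M x z.
Proof.
rewrite /bf -big_split; apply: eq_bigr => v _; rewrite -big_split.
by apply: eq_bigr => w _ /=; rewrite /fadd; ring.
Qed.

Lemma bf_scalel M t x y : bf M (fscale t x) y = t * bf M x y.
Proof.
rewrite /bf mulr_sumr; apply: eq_bigr => v _; rewrite mulr_sumr.
by apply: eq_bigr => w _ /=; rewrite /fscale; ring.
Qed.

Lemma bf_scaler M t x y : bf M x (fscale t y) = t * bf M x y.
Proof.
rewrite /bf mulr_sumr; apply: eq_bigr => v _; rewrite mulr_sumr.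
by apply: eq_bigr => w _ /=; rewrite /fscale; ring.
Qed.

Lemma bf_sym M x y : M^T = M -> bf M x y = bf M y x.
Proof.
move=> hM; rewrite /bf exchange_big; apply: eq_bigr => v _; apply: eq_bigr => w _.
have -> : M w v = M^T v w by rewrite mxE.
by rewrite hM; ring.
Qed.

Lemma bf_suml (I : finType) M (xs : I -> 'I_N -> R) y :
  bf M (fun v => \sum_i xs i v) y = \sum_i bf M (xs i) y.
Proof.
rewrite /bf [RHS]exchange_big; apply: eq_bigr => v _ /=.
rewrite [RHS]exchange_big; apply: eq_bigr => w _ /=.
rewrite mulr_sumr mulr_suml; apply: eq_bigr => i _; ring.
Qed.

Lemma bf_sumr (I : finType) M x (ys : I -> 'I_N -> R) :
  bf M x (fun v => \sum_i ys i v) = \sum_i bf M x (ys i).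
Proof.
rewrite /bf [RHS]exchange_big; apply: eq_bigr => v _ /=.
rewrite [RHS]exchange_big; apply: eq_bigr => w _ /=.
rewrite mulr_sumr; apply: eq_bigr => i _; ring.
Qed.

Lemma bf_ext M x x' y y' : (forall v, x v = x' v) -> (forall v, y v = y' v) ->
  bf M x y = bf M x' y'.
Proof.
move=> hx hy; apply: eq_bigr => v _; apply: eq_bigr => w _; by rewrite hx hy.
Qed.

Lemma sum_delta (F : 'I_N -> R) v : \sum_w (v == w)%:R * F w = F v.
Proof.
rewrite (bigD1 v) //= eqxx mul1r big1 ?addr0 // => w /negbTE.
by rewrite eq_sym => ->; rewrite mul0r.
Qed.

Lemma sum_delta' (F : 'I_N -> R) v : \sum_w (w == v)%:R * F w = F v.
Proof.
by rewrite -(sum_delta F v); apply: eq_bigr => w _; rewrite eq_sym.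
Qed.

Definition rowf x : 'rV[R]_N := \row_v x v.

Lemma bf_mx M x y : bf M x y = (rowf x *m M *m (rowf y)^T) 0 0.
Proof.
rewrite !mxE /bf exchange_big; apply: eq_bigr => w _.
rewrite !mxE mulr_suml; apply: eq_bigr => v _; rewrite !mxE; ring.
Qed.

End BF.

Section HG.
Variables (R : realType) (N : nat) (E : {set {set 'I_N}}) (phi : 'I_N -> {set 'I_N} -> int).
Hypothesis hdeg1 : forall v, (0 < hdeg E v)%N.

Local Notation d v := ((hdeg E v)%:R : R).
Local Notation a := (adj R E phi).
Local Notation lap := (lap_apply E phi).
Implicit Types (x y f h : 'I_N -> R).

Definition Dm : 'M[R]_N := \matrix_(v, w) ((v == w)%:R * d v).
Definition Am : 'M[R]_N := \matrix_(v, w) a v w.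
Definition Qm : 'M[R]_N := Dm - Am.

Lemma d_gt0 v : 0 < d v.
Proof. by rewrite ltr0n. Qed.

Lemma d_neq0 v : d v != 0.
Proof. by rewrite gt_eqF ?d_gt0. Qed.

Lemma adj_sym v w : a v w = a w v.
Proof.
rewrite /adj eq_sym; case: eqP => // _.
have e1 : [set e in E | [&& v \in e, w \in e & phi v e == - phi w e]] =
          [set e in E | [&& w \in e, v \in e & phi w e == - phi v e]].
  apply/setP => e; rewrite !inE; case: (e \in E) => //=.
  case: (v \in e); case: (w \in e) => //=.
  by apply/idP/idP => /eqP ->; rewrite opprK.
have e2 : [set e in E | [&& v \in e, w \in e & phi v e == phi w e]] =
          [set e in E | [&& w \in e, v \in e & phi w e == phi v e]].
  apply/setP => e; rewrite !inE; case: (e \in E) => //=.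
  by case: (v \in e); case: (w \in e) => //=.
by rewrite e1 e2.
Qed.

Lemma Am_sym : Am^T = Am.
Proof. by apply/matrixP => v w; rewrite !mxE adj_sym. Qed.

Lemma Dm_sym : Dm^T = Dm.
Proof.
apply/matrixP => v w; rewrite !mxE eq_sym; case: eqP => [->|]; by rewrite ?mul0r.
Qed.

Lemma Qm_sym : Qm^T = Qm.
Proof. by rewrite /Qm linearB /= Dm_sym Am_sym. Qed.

Lemma bf_subM (M1 M2 : 'M[R]_N) x y : bf (M1 - M2) x y = bf M1 x y - bf M2 x y.
Proof.
rewrite /bf -sumrB; apply: eq_bigr => v _; rewrite -sumrB.
by apply: eq_bigr => w _; rewrite !mxE; ring.
Qed.

Lemma wdot_bf x y : wdot E x y = bf Dm x y.
Proof.
rewrite /wdot /bf; apply: eq_bigr => v _.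
rewrite -(sum_delta (fun w => d v * x v * y w) v); apply: eq_bigr => w _.
by rewrite mxE; ring.
Qed.

Lemma wdot_sym x y : wdot E x y = wdot E y x.
Proof. by rewrite !wdot_bf bf_sym // Dm_sym. Qed.

Lemma lapE f v : lap f v = f v - (d v)^-1 * \sum_w a v w * f w.
Proof.
rewrite /lap_apply.
have -> : \sum_w lapmx R E phi v w * f w =
   \sum_w ((v == w)%:R * f w) - \sum_w (d v)^-1 * (a v w * f w).
  by rewrite -sumrB; apply: eq_bigr => w _; rewrite mxE; ring.
by rewrite sum_delta -mulr_sumr.
Qed.

Lemma wdot_lap f h : wdot E (lap f) h = bf Qm f h.
Proof.
rewrite /Qm bf_subM -wdot_bf.
have -> : bf Am f h = bf Am h f by rewrite bf_sym // Am_sym.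
rewrite /wdot /bf -sumrB; apply: eq_bigr => v _.
rewrite lapE mulrBr mulrBl; congr (_ - _).
rewrite mulrA mulfV ?d_neq0 // mul1r mulr_suml; apply: eq_bigr => w _.
by rewrite mxE; ring.
Qed.

Definition rowd f : 'rV[R]_N := \row_v (d v * f v).

Lemma rowd_lap f w : (rowd f *m lapmx R E phi) 0 w = d w * lap f w.
Proof.
rewrite lapE !mxE mulrBr mulrA mulfV ?d_neq0 // mul1r.
have -> : \sum_j rowd f 0 j * lapmx R E phi j w =
   \sum_j ((j == w)%:R * (d j * f j)) - \sum_j a w j * f j.
  rewrite -sumrB; apply: eq_bigr => j _; rewrite !mxE adj_sym.
  have := d_neq0 j; case: (eqVneq j w) => [->|_] hj /=; by field.
by rewrite sum_delta'.
Qed.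

Lemma wdot_ge0 f : 0 <= wdot E f f.
Proof.
rewrite /wdot sumr_ge0 // => v _; rewrite -mulrA mulr_ge0 ?ler0n //.
by rewrite -expr2 sqr_ge0.
Qed.

Lemma wdot_eq0 f : wdot E f f = 0 -> forall v, f v = 0.
Proof.
move=> h0 v; move: (h0); rewrite /wdot => /psumr_eq0P h.
have : d v * f v * f v = 0.
  apply: h => // u _; rewrite -mulrA mulr_ge0 ?ler0n // -expr2 sqr_ge0 //.
by move/eqP; rewrite -mulrA mulf_eq0 (negPf (d_neq0 v)) /= mulf_eq0 orbb => /eqP.
Qed.

Lemma wdot_gt0 f v : f v != 0 -> 0 < wdot E f f.
Proof.
move=> hv; rewrite lt_def wdot_ge0 andbT; apply/eqP => /wdot_eq0 /(_ v) /eqP.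
by rewrite (negPf hv).
Qed.

Lemma sq_le_wdot f v : f v * f v <= wdot E f f.
Proof.
rewrite /wdot (bigD1 v) //= -[X in X <= _]addr0; apply: lerD.
  rewrite -mulrA ler_peMl ?ler1n ?hdeg1 // -expr2 sqr_ge0 //.
by apply: sumr_ge0 => u _; rewrite -mulrA mulr_ge0 ?ler0n // -expr2 sqr_ge0.
Qed.

Definition bnd (M : 'M[R]_N) := \sum_v \sum_w `|M v w|.

Lemma bnd_ge0 M : 0 <= bnd M.
Proof. by apply: sumr_ge0 => v _; apply: sumr_ge0 => w _. Qed.

Lemma bf_bound M f : `|bf M f f| <= bnd M * wdot E f f.
Proof.
apply: (le_trans (ler_norm_sum _ _ _)).
rewrite /bnd mulr_suml; apply: ler_sum => v _.
apply: (le_trans (ler_norm_sum _ _ _)).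
rewrite mulr_suml; apply: ler_sum => w _.
rewrite -mulrA normrM ler_wpM2l //.
have h1 := sq_le_wdot f v; have h2 := sq_le_wdot f w.
rewrite normrM; have := normr_ge0 (f v); have := normr_ge0 (f w).
have e1 : f v * f v = `|f v| * `|f v| by rewrite -normrM ger0_norm // -expr2 sqr_ge0.
have e2 : f w * f w = `|f w| * `|f w| by rewrite -normrM ger0_norm // -expr2 sqr_ge0.
rewrite e1 in h1; rewrite e2 in h2; move: (`|f v|) (`|f w|) h1 h2 => p q h1 h2 hq hp.
nra.
Qed.

Lemma quad_le (A B C : R) : (forall t, 0 <= A + 2 * B * t + C * t ^+ 2) -> 0 <= C ->
  B ^+ 2 <= A * C.
Proof.
move=> h hC; case: (eqVneq C 0) => [C0|Cn0].
  rewrite C0 mulr0; case: (eqVneq B 0) => [->|Bn0]; first by rewrite expr0n.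
  have := h (- (A + 1) / (2 * B)); rewrite C0 mul0r addr0.
  have -> : 2 * B * (- (A + 1) / (2 * B)) = - (A + 1).
    by field.
  lra.
have Cp : 0 < C by rewrite lt_def Cn0 hC.
have := h (- B / C).
have -> : A + 2 * B * (- B / C) + C * (- B / C) ^+ 2 = (A * C - B ^+ 2) / C by field.
rewrite ler_pdivlMr // mul0r subr_ge0 //.
Qed.

Lemma bf_quad M x y t : M^T = M ->
  bf M (fadd x (fscale t y)) (fadd x (fscale t y)) =
  bf M x x + 2 * bf M x y * t + bf M y y * t ^+ 2.
Proof.
move=> hM; rewrite !bf_addl !bf_addr !bf_scalel !bf_scaler (bf_sym y x hM).
ring.
Qed.

Lemma bf_CS M x y : M^T = M -> (forall z, 0 <= bf M z z) ->
  bf M x y ^+ 2 <= bf M x x * bf M y y.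
Proof.
move=> hM hpsd; apply: quad_le; last exact: hpsd.
by move=> t; rewrite -bf_quad // mulrC.
Qed.


Definition Tm (l : R) : 'M[R]_N := Qm - l *: Dm.

Lemma bf_scaleM t (M : 'M[R]_N) x y : bf (t *: M) x y = t * bf M x y.
Proof.
rewrite /bf mulr_sumr; apply: eq_bigr => v _; rewrite mulr_sumr.
by apply: eq_bigr => w _; rewrite !mxE; ring.
Qed.

Lemma Tm_sym l : (Tm l)^T = Tm l.
Proof. by rewrite /Tm linearB linearZ /= Qm_sym Dm_sym. Qed.

Lemma bf_Tm l f h : bf (Tm l) f h = bf Qm f h - l * wdot E f h.
Proof. by rewrite /Tm bf_subM bf_scaleM wdot_bf. Qed.

Definition deltaf (w : 'I_N) : 'I_N -> R := fun v => (v == w)%:R.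

Lemma bf_delta (M : 'M[R]_N) f w : bf M f (deltaf w) = \sum_v M v w * f v.
Proof.
rewrite /bf; apply: eq_bigr => v _.
rewrite -(sum_delta' (fun u => M v u * f v) w); apply: eq_bigr => u _.
by rewrite /deltaf; ring.
Qed.

Lemma Tm_delta l f w : bf (Tm l) f (deltaf w) = d w * (lap f w - l * f w).
Proof.
rewrite bf_delta lapE.
have -> : \sum_v Tm l v w * f v =
   \sum_v ((v == w)%:R * (d v * f v * (1 - l))) - \sum_v a w v * f v.
  rewrite -sumrB; apply: eq_bigr => v _; rewrite !mxE adj_sym; ring.
rewrite sum_delta'; have := d_neq0 w => hw; by field.
Qed.

Lemma eig_of_fun l f : (forall w, lap f w = l * f w) ->
  rowd f *m lapmx R E phi = l *: rowd f.
Proof.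
move=> hf; apply/rowP => w; rewrite rowd_lap hf !mxE; ring.
Qed.

Lemma fun_of_eig l (u : 'rV[R]_N) : u *m lapmx R E phi = l *: u ->
  forall w, lap (fun v => u 0 v / d v) w = l * (u 0 w / d w).
Proof.
move=> hu w.
have hr : rowd (fun v => u 0 v / d v) = u.
  by apply/rowP => v; rewrite mxE; have := d_neq0 v => hv; field.
have := rowd_lap (fun v => u 0 v / d v) w; rewrite hr hu mxE => h.
have hw := d_neq0 w.
apply: (mulfI hw); rewrite -h; by field.
Qed.

Lemma rowd_neq0 f v : f v != 0 -> rowd f != 0.
Proof.
move=> hv; apply/eqP => /rowP /(_ v); rewrite !mxE => /eqP.
by rewrite mulf_eq0 (negPf (d_neq0 v)) (negPf hv).
Qed.

Lemma bfQm0 f : (forall v, f v = 0) -> bf Qm f f = 0.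
Proof.
move=> h0; rewrite -wdot_lap /wdot big1 // => v _; rewrite h0; ring.
Qed.

Lemma rayleigh_min (f0 : 'I_N -> R) (v0 : 'I_N) : f0 v0 != 0 ->
  exists m, eigenvalue (lapmx R E phi) m /\ forall f, m * wdot E f f <= bf Qm f f.
Proof.
move=> hf0.
pose S : set R := fun r => exists f, wdot E f f != 0 /\ r = bf Qm f f / wdot E f f.
have Wpos : forall f, wdot E f f != 0 -> 0 < wdot E f f.
  by move=> f hf; rewrite lt_def hf wdot_ge0.
have lbS : has_lbound S.
  exists (1 - bnd Am) => r [f [hW ->]].
  rewrite ler_pdivlMr ?Wpos // /Qm bf_subM -wdot_bf.
  have := bf_bound Am f; have := ler_norm (bf Am f f); lra.
have neS : (S !=set0)%classic.
  exists (bf Qm f0 f0 / wdot E f0 f0), f0; split => //.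
  by rewrite gt_eqF // (wdot_gt0 hf0).
have hinf : has_inf S by [].
pose m := inf S.
have hm : forall f, m * wdot E f f <= bf Qm f f.
  move=> f; case: (eqVneq (wdot E f f) 0) => [W0|Wn0].
    by rewrite W0 mulr0 bfQm0 // => v; apply: wdot_eq0.
  rewrite -ler_pdivlMr ?Wpos //; apply: ge_inf => //.
  by exists f.
exists m; split => //.
have psd : forall z, 0 <= bf (Tm m) z z.
  by move=> z; rewrite bf_Tm subr_ge0 hm.
case: (boolP (\det (Tm m) == 0)) => [/det0P [x x0 hx] | hdet].
  pose f := fun v => x 0 v.
  have hf : forall w, lap f w = m * f w.
    move=> w; have := Tm_delta m f w; rewrite bf_delta.
    have -> : \sum_v Tm m v w * f v = (x *m Tm m) 0 w.
      by rewrite mxE; apply: eq_bigr => v _; rewrite mulrC.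
    rewrite hx mxE => /esym /eqP; rewrite mulf_eq0 (negPf (d_neq0 w)) /= subr_eq0.
    by move/eqP.
  apply/eigenvalueP; exists (rowd f); first exact: eig_of_fun.
  have [v hv] : exists v, x 0 v != 0.
    apply/existsP; apply: contraNT x0; rewrite negb_exists => /forallP h.
    by apply/eqP/rowP => v; rewrite mxE; apply/eqP; move: (h v); rewrite negbK.
  exact: rowd_neq0 hv.
exfalso.
have hU : Tm m \in unitmx by rewrite unitmxE unitfE.
pose B := invmx (Tm m).
pose Cm := Dm *m B^T *m Dm.
pose K := bnd Cm + 1.
have Kpos : 0 < K by rewrite /K ltr_pwDr ?bnd_ge0.
have claim : forall f, wdot E f f <= bf (Tm m) f f * K.
  move=> f.
  pose y := fun v => (rowf f *m Dm *m B^T) 0 v.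
  have hy : rowf y = rowf f *m Dm *m B^T by apply/rowP => v; rewrite mxE.
  have hTB : Tm m *m B = 1%:M by rewrite /B mulmxV.
  have ht : (rowf y)^T = B *m Dm *m (rowf f)^T.
    by rewrite hy !trmx_mul trmxK Dm_sym mulmxA.
  have e1 : bf (Tm m) f y = wdot E f f.
    rewrite bf_mx ht wdot_bf bf_mx !mulmxA -(mulmxA _ (Tm m)) hTB mulmx1 //.
  have e2 : bf (Tm m) y y = bf Cm f f.
    rewrite bf_mx ht bf_mx hy /Cm !mulmxA -(mulmxA _ (Tm m)) hTB mulmx1 //.
  have cs := bf_CS f y (Tm_sym m) psd.
  rewrite e1 e2 in cs.
  have hb := bf_bound Cm f; have hb2 := ler_norm (bf Cm f f).
  have hT := psd f; have hW := wdot_ge0 f.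
  have hbn := bnd_ge0 Cm.
  case: (eqVneq (wdot E f f) 0) => [->|Wn0]; first by rewrite mulr_ge0 // ltW.
  have Wp : 0 < wdot E f f by rewrite lt_def Wn0 hW.
  have : wdot E f f * wdot E f f <= (bf (Tm m) f f * bnd Cm) * wdot E f f.
    rewrite -expr2; apply: (le_trans cs); rewrite -mulrA ler_wpM2l //.
    lra.
  rewrite ler_pM2r // => h; apply: (le_trans h); rewrite /K ler_wpM2l //.
  lra.
have Kinv : 0 < K^-1 by rewrite invr_gt0.
have [r [f [hW ->]] hr] := inf_adherent Kinv hinf.
move: hr; rewrite -/m.
have Wp : 0 < wdot E f f by rewrite lt_def hW wdot_ge0.
have := claim f; rewrite bf_Tm => hc.
have : m + K^-1 <= bf Qm f f / wdot E f f.
  rewrite ler_pdivlMr // mulrDl.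
  have : wdot E f f * K^-1 <= bf Qm f f - m * wdot E f f.
    by rewrite -ler_pdivlMr ?invr_gt0 // invrK.
  lra.
move=> h1 h2; have := lt_le_trans h2 h1; by rewrite ltxx.
Qed.

Lemma rayleigh_eq l f : (forall z, l * wdot E z z <= bf Qm z z) ->
  bf Qm f f = l * wdot E f f -> forall w, lap f w = l * f w.
Proof.
move=> hray hf w.
have psd : forall z, 0 <= bf (Tm l) z z by move=> z; rewrite bf_Tm subr_ge0.
have := bf_CS f (deltaf w) (Tm_sym l) psd.
rewrite [bf (Tm l) f f]bf_Tm hf subrr mul0r Tm_delta => h.
have : (d w * (lap f w - l * f w)) ^+ 2 = 0.
  by apply/eqP; rewrite eq_le h sqr_ge0.
move/eqP; rewrite sqrf_eq0 mulf_eq0 (negPf (d_neq0 w)) /= subr_eq0 => /eqP //.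
Qed.

Lemma bf0l (M : 'M[R]_N) x y : (forall v, x v = 0) -> bf M x y = 0.
Proof. by move=> h; rewrite /bf big1 // => v _; rewrite big1 // => w _; rewrite h; ring. Qed.

Lemma bf0r (M : 'M[R]_N) x y : (forall v, y v = 0) -> bf M x y = 0.
Proof. by move=> h; rewrite /bf big1 // => v _; rewrite big1 // => w _; rewrite h; ring. Qed.

Lemma lap_ext f f' w : (forall v, f v = f' v) -> lap f w = lap f' w.
Proof. by move=> h; rewrite /lap_apply; apply: eq_bigr => v _; rewrite h. Qed.

Lemma wdot_ext f f' h h' : (forall v, f v = f' v) -> (forall v, h v = h' v) ->
  wdot E f h = wdot E f' h'.
Proof. by move=> h1 h2; rewrite !wdot_bf; apply: bf_ext. Qed.

Lemma wdot_lap_eig l f h : (forall w, lap f w = l * f w) -> wdot E (lap f) h = l * wdot E f h.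
Proof.
move=> hf; rewrite /wdot mulr_sumr; apply: eq_bigr => v _; rewrite hf; ring.
Qed.

Lemma bf_delta2 (M : 'M[R]_N) v w : bf M (deltaf v) (deltaf w) = M v w.
Proof.
rewrite bf_delta -(sum_delta' (fun u => M u w) v); apply: eq_bigr => u _.
by rewrite /deltaf mulrC.
Qed.

Lemma lap_lin x y t w : lap (fadd x (fscale t y)) w = lap x w + t * lap y w.
Proof.
rewrite /lap_apply mulr_sumr.
rewrite (eq_bigr (fun v => lapmx R E phi w v * x v + t * (lapmx R E phi w v * y v))).
  by rewrite big_split.
by move=> v _; rewrite /fadd /fscale; ring.
Qed.

Lemma rV_neq0 (u : 'rV[R]_N) : u != 0 -> exists v, u 0 v != 0.
Proof.
move=> u0; case: (boolP [exists v, u 0 v != 0]) => [/existsP [v hv]|hno]; first by exists v.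
exfalso; move/negP: u0; apply; apply/eqP/rowP => v; rewrite mxE.
by move: hno; rewrite negb_exists => /forallP /(_ v); rewrite negbK => /eqP.
Qed.

Lemma rowd_div (u : 'rV[R]_N) : rowd (fun v => u 0 v / d v) = u.
Proof. by apply/rowP => v; rewrite mxE; have := d_neq0 v => hv; field. Qed.

Section Color.
Variables (k : nat) (c : 'I_N -> 'I_k).
Hypothesis hc : proper_strong_coloring E c.

Lemma adj_same v w : c v = c w -> a v w = 0.
Proof.
move=> hvw; rewrite /adj; case: eqP => // /eqP vw.
have e0 : forall P : {set 'I_N} -> bool,
    [set e in E | [&& v \in e, w \in e & P e]] = finset.set0.
  move=> P; apply/setP => e; rewrite !inE.
  apply/negP => /andP [eE /and3P [ve we _]].
  by have := hc eE ve we vw; rewrite hvw eqxx.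
by rewrite (e0 (fun e => phi v e == - phi w e)) (e0 (fun e => phi v e == phi w e)) cards0 subrr.
Qed.

Definition gi (g : 'I_N -> R) (i : 'I_k) : 'I_N -> R := fun v => if c v == i then g v else 0.

Lemma gi_sum g v : \sum_i gi g i v = g v.
Proof.
rewrite (bigD1 (c v)) //= /gi eqxx big1 ?addr0 // => i /negbTE.
by rewrite eq_sym => ->.
Qed.

Lemma Am_gi_ii g i : bf Am (gi g i) (gi g i) = 0.
Proof.
rewrite /bf big1 // => v _; rewrite big1 // => w _; rewrite /gi mxE.
case: (eqVneq (c v) i) => [hv|]; last by rewrite mulr0 mul0r.
case: (eqVneq (c w) i) => [hw|]; last by rewrite mulr0.
have -> : a v w = 0 by apply: adj_same; rewrite hv hw.
by rewrite !mul0r.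
Qed.

Lemma Dm_gi_ij g i j : i != j -> bf Dm (gi g i) (gi g j) = 0.
Proof.
move=> ij; rewrite -wdot_bf /wdot big1 // => v _; rewrite /gi.
case: (eqVneq (c v) i) => [hv|]; last by rewrite mulr0 mul0r.
by rewrite hv (negPf ij) mulr0.
Qed.

Lemma Sg_bf g i j : Sg E phi c g i j = bf Am (gi g i) (gi g j).
Proof.
rewrite /Sg /bf big_mkcond; apply: eq_bigr => v _ /=.
rewrite /gi; case: (eqVneq (c v) i) => _ /=; last first.
  by rewrite big1 // => w _; rewrite mulr0 mul0r.
rewrite big_mkcond; apply: eq_bigr => w _ /=; rewrite mxE.
by case: (c w == j); rewrite ?mulr0.
Qed.

Lemma gij_eq g i j : i != j -> forall v,
  gij c g i j v = fadd (gi g i) (fscale (-1) (gi g j)) v.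
Proof.
move=> ij v; rewrite /gij /fadd /fscale /gi.
case: (eqVneq (c v) i) => [hv|hv].
  by rewrite hv (negPf ij) mulr0 addr0.
by case: (c v == j); rewrite ?mulr0 ?addr0 ?add0r ?mulN1r.
Qed.

Lemma wdot_gi_sum g : wdot E g g = \sum_i wdot E (gi g i) (gi g i).
Proof.
rewrite wdot_bf (@bf_ext _ _ Dm g (fun v => \sum_i gi g i v) g (fun v => \sum_i gi g i v)); 
  try by move=> v; rewrite gi_sum.
rewrite bf_suml; apply: eq_bigr => i _; rewrite bf_sumr (bigD1 i) //= big1 ?addr0.
  by rewrite wdot_bf.
by move=> j ji; rewrite Dm_gi_ij // eq_sym.
Qed.

Lemma Am_gi_sum g : bf Am g g = \sum_i \sum_j bf Am (gi g i) (gi g j).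
Proof.
rewrite (@bf_ext _ _ Am g (fun v => \sum_i gi g i v) g (fun v => \sum_i gi g i v));
  try by move=> v; rewrite gi_sum.
by rewrite bf_suml; apply: eq_bigr => i _; rewrite bf_sumr.
Qed.

Lemma partA l1 lN g :
  (forall z, l1 * wdot E z z <= bf Qm z z) ->
  k%:R * (1 - l1) = lN - l1 ->
  (forall w, lap g w = lN * g w) ->
  forall i j, i != j -> 2 * bf Am (gi g i) (gi g j) =
     - (1 - l1) * (wdot E (gi g i) (gi g i) + wdot E (gi g j) (gi g j)).
Proof.
move=> hray hrel heig.
pose ai := fun i => wdot E (gi g i) (gi g i).
pose S := fun i j => bf Am (gi g i) (gi g j).
pose T := wdot E g g.
pose t := fun i j => (1 - l1) * (ai i + ai j) + 2 * S i j.
have hz : forall i j, i != j ->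
   bf Qm (fadd (gi g i) (fscale (-1) (gi g j))) (fadd (gi g i) (fscale (-1) (gi g j)))
     = ai i + ai j + 2 * S i j /\
   wdot E (fadd (gi g i) (fscale (-1) (gi g j))) (fadd (gi g i) (fscale (-1) (gi g j)))
     = ai i + ai j.
  move=> i j ij; rewrite /Qm bf_subM wdot_bf !bf_quad ?Dm_sym ?Am_sym //.
  rewrite (Dm_gi_ij g ij) !Am_gi_ii /ai /S !wdot_bf; split; ring.
have tpos : forall i j, i != j -> 0 <= t i j.
  move=> i j ij; have [h1 h2] := hz i j ij; have := hray (fadd (gi g i) (fscale (-1) (gi g j))).
  rewrite h1 h2 /t; lra.
have hQg : bf Am g g = (1 - lN) * T.
  have := wdot_lap g g; rewrite (wdot_lap_eig _ heig) /Qm bf_subM -wdot_bf -/T.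
  lra.
have sumA : \sum_i \sum_j S i j = (1 - lN) * T by rewrite -hQg Am_gi_sum.
have sumT : \sum_i ai i = T by rewrite /T wdot_gi_sum.
have sumAA : \sum_i \sum_j (ai i + ai j) = T *+ k + T *+ k.
  rewrite -sumT.
  under eq_bigr => i _ do rewrite big_split /= sumr_const card_ord.
  by rewrite big_split /= sumrMnl sumr_const card_ord.
have tot : \sum_i \sum_j t i j = (1 - l1) * (T *+ k + T *+ k) + 2 * ((1 - lN) * T).
  rewrite -sumAA -sumA !mulr_sumr -big_split; apply: eq_bigr => i _.
  by rewrite !mulr_sumr -big_split.
have diag : \sum_i t i i = 2 * (1 - l1) * T.
  rewrite -sumT mulr_sumr; apply: eq_bigr => i _.
  by rewrite /t /S Am_gi_ii; ring.
have off : \sum_i \sum_(j | j != i) t i j = 0.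
  have : \sum_i \sum_j t i j = \sum_i t i i + \sum_i \sum_(j | j != i) t i j.
    rewrite -big_split; apply: eq_bigr => i _; by rewrite (bigD1 i).
  rewrite tot diag.
  move: (\sum_i \sum_(j | j != i) t i j) => X h.
  clearbody T.
  have : X = 2 * T * (k%:R * (1 - l1) - (lN - l1)).
    have -> : X = (1 - l1) * (T *+ k + T *+ k) + 2 * ((1 - lN) * T) - 2 * (1 - l1) * T.
      by rewrite h; ring.
    ring.
  by rewrite hrel subrr mulr0.
move=> i j ij.
have nn : forall i', true -> 0 <= \sum_(j | j != i') t i' j.
  by move=> i' _; apply: sumr_ge0 => j' hj'; apply: tpos; rewrite eq_sym.
have hi := @psumr_eq0P _ _ _ _ nn off i isT.
have nn2 : forall j', j' != i -> 0 <= t i j'.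
  by move=> j' hj'; apply: tpos; rewrite eq_sym.
have : t i j = 0.
  by apply: (@psumr_eq0P _ _ _ _ nn2 hi j); rewrite eq_sym.
rewrite /t /S /ai; lra.
Qed.

Lemma gij_forms g i j : i != j ->
   bf Qm (fadd (gi g i) (fscale (-1) (gi g j))) (fadd (gi g i) (fscale (-1) (gi g j)))
     = wdot E (gi g i) (gi g i) + wdot E (gi g j) (gi g j) + 2 * bf Am (gi g i) (gi g j) /\
   wdot E (fadd (gi g i) (fscale (-1) (gi g j))) (fadd (gi g i) (fscale (-1) (gi g j)))
     = wdot E (gi g i) (gi g i) + wdot E (gi g j) (gi g j).
Proof.
move=> ij; rewrite /Qm bf_subM !wdot_bf !bf_quad ?Dm_sym ?Am_sym //.
rewrite (Dm_gi_ij g ij) !Am_gi_ii; split; ring.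
Qed.

Lemma partA_full l1 lN g :
  (forall z, l1 * wdot E z z <= bf Qm z z) -> l1 < 1 ->
  k%:R * (1 - l1) = lN - l1 ->
  is_eigenfunction E phi g lN ->
  (forall i, exists v, c v = i /\ g v != 0) /\
  (forall i j, i != j -> Sg E phi c g i j < 0) /\
  (forall i j, i != j -> RQ E phi (gij c g i j) = l1 /\ is_eigenfunction E phi (gij c g i j) l1).
Proof.
move=> hray hl1 hrel [[v0 hv0] heig].
have hA := partA hray hrel heig.
have supp : forall i, exists v, c v = i /\ g v != 0.
  move=> i; case: (boolP [exists v, (c v == i) && (g v != 0)]).
    by move=> /existsP [v /andP [/eqP hv hgv]]; exists v.
  move=> hno; exfalso.
  have hz : forall v, gi g i v = 0.
    move=> v; rewrite /gi; case: (eqVneq (c v) i) => // hv.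
    by move: hno; rewrite negb_exists => /forallP /(_ v); rewrite hv eqxx /= negbK => /eqP.
  have ij : i != c v0.
    apply/eqP => hi; move: (hz v0); rewrite /gi -hi eqxx => /eqP; by rewrite (negPf hv0).
  have := hA i (c v0) ij; rewrite (bf0l _ _ hz) wdot_bf (bf0l _ _ hz) mulr0 add0r.
  move/esym/eqP; rewrite mulf_eq0 oppr_eq0 subr_eq0 (gt_eqF hl1) /= => /eqP h.
  have := wdot_eq0 h v0; rewrite /gi eqxx => /eqP; by rewrite (negPf hv0).
have apos : forall i, 0 < wdot E (gi g i) (gi g i).
  move=> i; have [v [hv hg]] := supp i; apply: (wdot_gt0 (v:=v)).
  by rewrite /gi hv eqxx.
split => //; split.
  move=> i j ij; rewrite Sg_bf; have := hA i j ij; have := apos i; have := apos j.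
  move: (bf Am _ _) (wdot E (gi g i) _) (wdot E (gi g j) _) => S ai aj.
  nra.
move=> i j ij.
have [hQ hW] := gij_forms g ij.
have hQ' : bf Qm (fadd (gi g i) (fscale (-1) (gi g j))) (fadd (gi g i) (fscale (-1) (gi g j)))
   = l1 * wdot E (fadd (gi g i) (fscale (-1) (gi g j))) (fadd (gi g i) (fscale (-1) (gi g j))).
  rewrite hQ hW; have := hA i j ij.
  move: (bf Am _ _) (wdot E (gi g i) _) (wdot E (gi g j) _) => S ai aj.
  lra.
have hWp : 0 < wdot E (fadd (gi g i) (fscale (-1) (gi g j))) (fadd (gi g i) (fscale (-1) (gi g j))).
  by rewrite hW; apply: ltr_wpDr; [exact: ltW (apos j) | exact: apos].
have ext := gij_eq g ij.
split.
  rewrite /RQ wdot_lap (bf_ext _ ext ext) (wdot_ext ext ext) hQ'.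
  by rewrite mulfK // gt_eqF.
have heq := rayleigh_eq hray hQ'.
split.
  have [v [hv hg]] := supp i; exists v; by rewrite /gij hv eqxx.
by move=> w; rewrite (lap_ext _ ext) heq ext.
Qed.

End Color.

End HG.

Unset Implicit Arguments.
Set Strict Implicit.

Theorem mainTheorem2 (R : realType) (N : nat) (E : {set {set 'I_N}})
  (phi : 'I_N -> {set 'I_N} -> int)
  (hG : is_oriented_hypergraph E phi)
  (hdeg1 : forall v, (0 < hdeg E v)%N)
  (hA : adjmx R E phi != 0)
  (chi : nat) (hchi : is_strong_chromatic_number E chi)
  (l1 lN : R) (hl1 : is_min_eigenvalue E phi l1) (hlN : is_max_eigenvalue E phi lN)
  (hrel : chi%:R = (lN - l1) / (1 - l1)) :
  (forall (g : 'I_N -> R), is_eigenfunction E phi g lN ->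
   forall (c : 'I_N -> 'I_chi), proper_strong_coloring E c ->
     (forall i : 'I_chi, exists v, c v = i /\ g v != 0) /\
     (forall i j : 'I_chi, (i < j)%N -> Sg E phi c g i j < 0) /\
     (forall i j : 'I_chi, (i < j)%N ->
        RQ E phi (gij c g i j) = l1 /\ l1 = (chi%:R - lN) / (chi%:R - 1) /\
        is_eigenfunction E phi (gij c g i j) l1)) /\
  l1 = (chi%:R - lN) / (chi%:R - 1) /\
  (chi.-1 <= mult E phi l1)%N /\
  ((1 < mult E phi lN)%N -> (chi.-1 < mult E phi l1)%N).
Proof.
have [c0 hc0] := hchi.1.
have [v1 [w1 hvw]] : exists v w, adj R E phi v w != 0.
  case: (boolP [exists v, [exists w, adj R E phi v w != 0]]).
    by move=> /existsP [v /existsP [w h]]; exists v, w.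
  move=> hno; exfalso; move/negP: hA; apply; apply/eqP/matrixP => v w; rewrite !mxE.
  move: hno; rewrite negb_exists => /forallP /(_ v); rewrite negb_exists => /forallP /(_ w).
  by rewrite negbK => /eqP.
have v1w1 : v1 != w1.
  by apply/eqP => e; move: hvw; rewrite e /adj eqxx eqxx.
have chi2 : (1 < chi)%N.
  rewrite ltnNge; apply/negP => hle.
  have e : c0 v1 = c0 w1.
    apply: val_inj; move: (c0 v1) (c0 w1) => [p hp] [q hq] /=; lia.
  by move: hvw; rewrite (@adj_same R N E phi _ _ hc0 _ _ e) eqxx.
have h01 : deltaf R v1 v1 != 0 by rewrite /deltaf eqxx oner_neq0.
have [m [hmeig hm]] := @rayleigh_min R N E phi hdeg1 (deltaf R v1) v1 h01.
have l1m : l1 <= m := hl1.2 m hmeig.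
have hray : forall z, l1 * wdot E z z <= bf (Qm R E phi) z z.
  move=> z; apply: le_trans (hm z); rewrite ler_wpM2r //; exact: wdot_ge0.
have adjd : forall v, adj R E phi v v = 0 by move=> v; rewrite /adj eqxx.
have hl1lt : l1 < 1.
  pose s := adj R E phi v1 w1.
  have := hray (fadd (deltaf R v1) (fscale s (deltaf R w1))).
  rewrite wdot_bf !bf_quad ?Qm_sym ?Dm_sym // !bf_delta2 /Qm /Dm /Am !mxE.
  rewrite !eqxx (negPf v1w1) !adjd -/s /= !mul1r !mul0r.
  have hdv := d_gt0 R hdeg1 v1; have hdw := d_gt0 R hdeg1 w1.
  have s2 : 0 < s * s by rewrite -expr2 exprn_even_gt0.
  rewrite expr2.
  move: ((hdeg E v1)%:R : R) ((hdeg E w1)%:R : R) hdv hdw => dv dw hdv hdw.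
  have -> : 2 * (0 - s) * s = - 2 * (s * s) by ring.
  move: (s * s) s2 => ss s2 h.
  rewrite ltNge; apply/negP => hl.
  have h2 : 0 <= (l1 - 1) * (dv + dw * ss).
    apply: mulr_ge0; first by lra.
    by apply: addr_ge0; [exact: ltW | apply: mulr_ge0; exact: ltW].
  lra.
have l1n1 : 1 - l1 != 0 by rewrite subr_eq0 eq_sym lt_eqF.
have hrel' : chi%:R * (1 - l1) = lN - l1 by rewrite hrel divfK.
have chi1 : (chi%:R - 1 : R) != 0.
  by rewrite subr_eq0 pnatr_eq1; apply/eqP => e; rewrite e in chi2.
have hl1f : l1 = (chi%:R - lN) / (chi%:R - 1).
  apply: (mulIf chi1); rewrite divfK //; lra.
split.
  move=> g hg c hc.
  have [h1 [h2 h3]] := partA_full hdeg1 hc hray hl1lt hrel' hg.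
  have neq : forall i j : 'I_chi, (i < j)%N -> i != j.
    by move=> i j ij; apply/eqP => e; rewrite e ltnn in ij.
  split => //; split; first by move=> i j ij; apply: h2; apply: neq.
  by move=> i j ij; have [r1 r2] := h3 i j (neq _ _ ij).
split => //.
have [u hu u0] := eigenvalueP hlN.1.
pose g := fun v => u 0 v / (hdeg E v)%:R.
have hgE : forall w, lap_apply E phi g w = lN * g w := fun_of_eig hdeg1 hu.
have [vu hvu] := rV_neq0 u0.
have hgv : g vu != 0 by rewrite /g mulf_neq0 // invr_eq0 (d_neq0 R hdeg1).
have hg : is_eigenfunction E phi g lN by split; [exists vu | ].
have [k hk] : exists k, chi = k.+2 by exists chi.-2; lia.
subst chi.
have [supp [_ hE]] := partA_full hdeg1 hc0 hray hl1lt hrel' hg.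
pose F := fun (j : 'I_k.+1) => gij c0 g ord0 (lift ord0 j).
pose W : 'M[R]_(k.+1, N) := \matrix_(j, v) ((hdeg E v)%:R * F j v).
have rowW : forall j, row j W = rowd E (F j) by move=> j; apply/rowP => v; rewrite !mxE.
have hW : W *m lapmx R E phi = l1 *: W.
  apply/row_matrixP => j; rewrite row_mul rowW.
  rewrite (eig_of_fun hdeg1 (hE ord0 (lift ord0 j) (neq_lift _ _)).2.2).
  by apply/rowP => v; rewrite !mxE.
have freeW : row_free W.
  apply/inj_row_free => x hx; apply/rowP => j; rewrite mxE.
  have [v [hv hgv']] := supp (lift ord0 j).
  have := congr1 (fun M : 'M[R]_(1,N) => M 0 v) hx; rewrite !mxE (bigD1 j) //= big1.
    rewrite addr0 !mxE /F /gij hv eq_sym (negPf (neq_lift _ _)) eqxx => /eqP.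
    rewrite mulf_eq0 mulf_eq0 oppr_eq0 (negPf hgv') (negPf (d_neq0 R hdeg1 v)) orbF.
    by rewrite orbF => /eqP.
  move=> j' hj'; rewrite !mxE /F /gij hv eq_sym (negPf (neq_lift _ _)).
  by rewrite (inj_eq lift_inj) eq_sym (negPf hj') !mulr0.
have cp0 : char_poly (lapmx R E phi) != 0 := monic_neq0 (char_poly_monic _).
have dvd1 := eigen_rows_dvd freeW hW.
have mult1 : (k.+1 <= mult E phi l1)%N by rewrite /mult mup_geq.
split => //.
move=> hmult.
have dvd2 : ('X - lN%:P) ^+ 2 %| char_poly (lapmx R E phi) by rewrite -mup_geq.
have [x [cst [hx hind]]] := eigen_second u0 hu dvd2.
pose h := fun v => x 0 v / (hdeg E v)%:R.
have hrh : rowd E h = x := rowd_div hdeg1 x.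
have hrg : rowd E g = u := rowd_div hdeg1 u.
have hlh : forall w, lap_apply E phi h w = lN * h w + cst * g w.
  move=> w; have e1 := rowd_lap phi hdeg1 h w.
  rewrite hrh hx !mxE in e1.
  have hw := d_neq0 R hdeg1 w.
  apply: (mulfI hw); rewrite -e1 /h /g; by field.
have cst0 : cst = 0.
  have e1 := wdot_lap phi hdeg1 h g.
  have e2 := wdot_lap phi hdeg1 g h.
  rewrite (bf_sym g h (Qm_sym R E phi)) -e1 (wdot_lap_eig _ hgE) in e2.
  have e3 : wdot E (lap_apply E phi h) g = lN * wdot E h g + cst * wdot E g g.
    rewrite /wdot !mulr_sumr.
    rewrite (eq_bigr (fun v => lN * ((hdeg E v)%:R * h v * g v) +
                               cst * ((hdeg E v)%:R * g v * g v))).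
      by rewrite big_split.
    by move=> v _; rewrite hlh; ring.
  rewrite e3 wdot_sym in e2.
  have hpos := wdot_gt0 hdeg1 hgv.
  have : cst * wdot E g g = 0 by lra.
  by move/eqP; rewrite mulf_eq0 (gt_eqF hpos) orbF => /eqP.
have hhE : forall w, lap_apply E phi h w = lN * h w.
  by move=> w; rewrite hlh cst0 mul0r addr0.
have [v0 [hv0 hgv0]] := supp ord0.
pose tt := h v0 / g v0.
pose h' := fadd h (fscale (- tt) g).
have hh'E : forall w, lap_apply E phi h' w = lN * h' w.
  by move=> w; rewrite lap_lin hhE hgE /h' /fadd /fscale; ring.
have hh'v0 : h' v0 = 0 by rewrite /h' /fadd /fscale /tt; field.
have hh'nz : exists v, h' v != 0.
  case: (boolP [exists v, h' v != 0]) => [/existsP [v hv]|hno]; first by exists v.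
  exfalso; move/negP: (hind tt); apply; apply/eqP/rowP => v.
  rewrite -hrh -hrg !mxE.
  have : h' v = 0.
    by move: hno; rewrite negb_exists => /forallP /(_ v); rewrite negbK => /eqP.
  rewrite /h' /fadd /fscale => e.
  have -> : h v = tt * g v by lra.
  ring.
have hh' : is_eigenfunction E phi h' lN by split.
have [supp' [_ hE']] := partA_full hdeg1 hc0 hray hl1lt hrel' hh'.
have [v2 [hv2 hh'v2]] := supp' ord0.
pose y := gij c0 h' ord0 (lift ord0 ord0).
have hyE := (hE' ord0 (lift ord0 ord0) (neq_lift _ _)).2.2.
pose W2 : 'M[R]_(1 + k.+1, N) := col_mx (rowd E y) W.
have hW2 : W2 *m lapmx R E phi = l1 *: W2.
  by rewrite mul_col_mx hW (eig_of_fun hdeg1 hyE) scale_col_mx.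
have freeW2 : row_free W2.
  apply/inj_row_free => z hz.
  rewrite -[z]hsubmxK mul_row_col in hz *.
  move: (lsubmx z) (rsubmx z) hz => z1 z2 hz.
  have ev : forall v, z1 0 0 * ((hdeg E v)%:R * y v) +
       \sum_j z2 0 j * ((hdeg E v)%:R * F j v) = 0.
    move=> v; have := congr1 (fun M : 'M[R]_(1,N) => M 0 v) hz.
    rewrite !mxE big_ord1 !mxE => e; rewrite -[RHS]e; congr (_ + _).
    by apply: eq_bigr => j _; rewrite !mxE.
  have Fv : forall v j, c0 v = ord0 -> F j v = g v.
    by move=> v j hv; rewrite /F /gij hv eqxx.
  have yv : forall v, c0 v = ord0 -> y v = h' v.
    by move=> v hv; rewrite /y /gij hv eqxx.
  have sz : \sum_j z2 0 j = 0.
    have := ev v0; rewrite yv // hh'v0 mulr0 mulr0 add0r.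
    under eq_bigr => j _ do rewrite Fv //.
    rewrite -mulr_suml => /eqP; rewrite mulf_eq0 mulf_eq0 (negPf hgv0).
    by rewrite (negPf (d_neq0 R hdeg1 v0)) orbF orbF => /eqP.
  have z10 : z1 0 0 = 0.
    have := ev v2; rewrite yv //.
    under eq_bigr => j _ do rewrite Fv //.
    rewrite -mulr_suml sz mul0r addr0 => /eqP; rewrite !mulf_eq0 (negPf hh'v2).
    by rewrite (negPf (d_neq0 R hdeg1 v2)) /= orbF => /eqP.
  have z1z : z1 = 0 by apply/rowP => i; rewrite (ord1 i) z10 mxE.
  rewrite z1z mul0mx add0r in hz.
  have z2z : z2 = 0 by apply: (row_free_inj freeW); rewrite hz mul0mx.
  by rewrite z1z z2z row_mx0.
have dvd3 := eigen_rows_dvd freeW2 hW2.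
have : (k.+2 <= mult E phi l1)%N by rewrite /mult mup_geq.
by [].
Qed.
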